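(* Under the standing assumptions below, suppose $3\sigma>2L$, $0<\gamma<\frac{3\sigma-2L}{L^2}$, and that the sequence $\{(y^t,z^t,x^t)\}$ generated by the PR splitting iteration has a cluster point $(y^*,z^*,x^* )$. Suppose also that $\mathcal{P}_\gamma$ is a KL function. Then the whole sequence $\{(y^t,z^t,x^t)\}$ is convergent.
   Context: Standing assumptions: $f:\mathbb{R}^n\to\mathbb{R}$ is differentiable and strongly convex with modulus at least $\sigma>0$ (i.e. $f-\frac{\sigma}{2}\|\cdot\|^2$ is convex), and $\nabla f$ is Lipschitz continuous with modulus at most $L>0$. The function $g:\mathbb{R}^n\to(-\infty,\infty]$ is proper and lower semicontinuous, and for the $\gamma>0$ used, $\operatorname{Argmin}_u\{\gamma g(u)+\frac12\|u-w\|^2\}$ is nonempty for every $w\in\mathbb{R}^n$. PR splitting iteration: given $x^0$ and $\gamma>0$, for $t=0,1,2,\dots$: $y^{t+1}=\operatorname{argmin}_y\{f(y)+\frac{1}{2\gamma}\|y-x^t\|^2\}$; $z^{t+1}\in\operatorname{Argmin}_z\{g(z)+\frac{1}{2\gamma}\|2y^{t+1}-x^t-z\|^2\}$; $x^{t+1}=x^t+2(z^{t+1}-y^{t+1})$. Merit function: $\mathcal{P}_\gamma(y,z,x):=f(y)+g(z)-\frac{3}{2\gamma}\|y-z\|^2+\frac{1}{\gamma}\langle x-y,z-y\rangle$. KL function: a proper lower semicontinuous $h$ is a KL function if it has the Kurdyka–Łojasiewicz property at every point $\bar w$ of $\operatorname{dom}\partial h$, i.e. there exist $\eta\in(0,\infty]$,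 a neighborhood $U$ of $\bar w$ and a continuous concave $\varphi:[0,\eta)\to[0,\infty)$ with $\varphi(0)=0$, $\varphi$ continuously differentiable on $(0,\eta)$ with $\varphi'>0$, such that $\varphi'(h(w)-h(\bar w))\operatorname{dist}(0,\partial h(w))\ge1$ for all $w\in U$ with $h(\bar w)<h(w)<h(\bar w)+\eta$ ($\partial$ the limiting subdifferential). *)

(* Defs.v *)
From Stdlib Require Import Reals.
From Stdlib Require Vectors.Fin.
Open Scope R_scope.

Definition vec (n : nat) : Type := Fin.t n -> R.

Fixpoint fsum (n : nat) : (Fin.t n -> R) -> R :=
  match n return (Fin.t n -> R) -> R with
  | O => fun _ => 0
  | S m => fun v => v Fin.F1 + fsum m (fun i => v (Fin.FS i))
  end.

Definition vdot {n} (u v : vec n) : R := fsum n (fun i => u i * v i).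
Definition vadd {n} (u v : vec n) : vec n := fun i => u i + v i.
Definition vsub {n} (u v : vec n) : vec n := fun i => u i - v i.
Definition vscal {n} (a : R) (u : vec n) : vec n := fun i => a * u i.
Definition vnorm {n} (u : vec n) : R := sqrt (vdot u u).

Definition enorm {E} (ip : E -> E -> R) (u : E) : R := sqrt (ip u u).

Definition ecv {E} (ip : E -> E -> R) (sub : E -> E -> E) (s : nat -> E) (l : E) : Prop :=
  Un_cv (fun k => enorm ip (sub (s k) l)) 0.

Definition ecluster {E} (ip : E -> E -> R) (sub : E -> E -> E) (s : nat -> E) (l : E) : Prop :=
  forall eps, eps > 0 -> forall N : nat, exists k : nat, (N <= k)%nat /\ enorm ip (sub (s k) l) < eps.

(* extended-real valued functions: None stands for +infinity *)
Definition eproper {E} (h : E -> option R) : Prop := exists w r, h w = Some r.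

(* lower semicontinuity: all sublevel sets {h <= alpha} are closed *)
Definition elsc {E} (ip : E -> E -> R) (sub : E -> E -> E) (h : E -> option R) : Prop :=
  forall (alpha : R) (s : nat -> E) (l : E),
    (forall k, exists r, h (s k) = Some r /\ r <= alpha) ->
    ecv ip sub s l ->
    exists r, h l = Some r /\ r <= alpha.

Definition frechet_subgrad {E} (ip : E -> E -> R) (sub : E -> E -> E)
    (h : E -> option R) (w v : E) : Prop :=
  exists hw, h w = Some hw /\
  forall eps, eps > 0 -> exists delta, delta > 0 /\
    forall u, enorm ip (sub u w) < delta ->
      match h u with
      | None => True
      | Some hu => hu >= hw + ip v (sub u w) - eps * enorm ip (sub u w)
      end.

Definition limiting_subgrad {E} (ip : E -> E -> R) (sub : E -> E -> E)
    (h : E -> option R) (w v : E) : Prop :=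
  exists hw, h w = Some hw /\
  exists (wk vk : nat -> E) (hk : nat -> R),
    (forall k, h (wk k) = Some (hk k) /\ frechet_subgrad ip sub h (wk k) (vk k)) /\
    ecv ip sub wk w /\ Un_cv hk hw /\ ecv ip sub vk v.

(* eta in (0, +infinity]: None stands for +infinity *)
Definition lt_eta (s : R) (eta : option R) : Prop :=
  match eta with None => True | Some e => s < e end.

(* KL property at wb (wb in dom \partial h);  the inequality
   phi'(h w - h wb) * dist(0, \partial h w) >= 1 is written out as
   "for every v in \partial h w, phi'(h w - h wb) * ||v|| >= 1"
   (dist = infimum of ||v||, +infinity on the empty set). *)
Definition KL_at {E} (ip : E -> E -> R) (sub : E -> E -> E)
    (h : E -> option R) (wb : E) : Prop :=
  exists hb, h wb = Some hb /\
  exists (eta : option R) (delta : R) (phi dphi : R -> R),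
    lt_eta 0 eta /\ delta > 0 /\
    phi 0 = 0 /\
    (forall s, 0 <= s -> lt_eta s eta -> 0 <= phi s) /\
    (forall s, 0 <= s -> lt_eta s eta ->
       forall eps, eps > 0 -> exists d, d > 0 /\
         forall t, 0 <= t -> lt_eta t eta -> Rabs (t - s) < d -> Rabs (phi t - phi s) < eps) /\
    (forall a b t, 0 <= a -> lt_eta a eta -> 0 <= b -> lt_eta b eta -> 0 <= t <= 1 ->
       t * phi a + (1 - t) * phi b <= phi (t * a + (1 - t) * b)) /\
    (forall s, 0 < s -> lt_eta s eta ->
       derivable_pt_lim phi s (dphi s) /\ continuity_pt dphi s /\ 0 < dphi s) /\
    (forall w hw, enorm ip (sub w wb) < delta -> h w = Some hw ->
       hb < hw -> lt_eta (hw - hb) eta ->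
       forall v, limiting_subgrad ip sub h w v -> dphi (hw - hb) * enorm ip v >= 1).

Definition KL_function {E} (ip : E -> E -> R) (sub : E -> E -> E) (h : E -> option R) : Prop :=
  eproper h /\ elsc ip sub h /\
  forall wb, (exists v, limiting_subgrad ip sub h wb v) -> KL_at ip sub h wb.

Definition vcv {n} (s : nat -> vec n) (l : vec n) : Prop := ecv (@vdot n) (@vsub n) s l.

Definition triple (n : nat) : Type := (vec n * vec n * vec n)%type.
Definition tdot {n} (a b : triple n) : R :=
  let '(a1, a2, a3) := a in let '(b1, b2, b3) := b in vdot a1 b1 + vdot a2 b2 + vdot a3 b3.
Definition tsub {n} (a b : triple n) : triple n :=
  let '(a1, a2, a3) := a in let '(b1, b2, b3) := b in (vsub a1 b1, vsub a2 b2, vsub a3 b3).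

Definition is_gradient {n} (f : vec n -> R) (df : vec n -> vec n) : Prop :=
  forall x eps, eps > 0 -> exists delta, delta > 0 /\
    forall y, vnorm (vsub y x) < delta ->
      Rabs (f y - f x - vdot (df x) (vsub y x)) <= eps * vnorm (vsub y x).

Definition convex_fun {n} (h : vec n -> R) : Prop :=
  forall x y t, 0 <= t <= 1 ->
    h (vadd (vscal t x) (vscal (1 - t) y)) <= t * h x + (1 - t) * h y.

Definition strongly_convex {n} (f : vec n -> R) (sigma : R) : Prop :=
  convex_fun (fun x => f x - sigma / 2 * (vnorm x) ^ 2).

Definition lipschitz {n} (F : vec n -> vec n) (L : R) : Prop :=
  forall x y, vnorm (vsub (F x) (F y)) <= L * vnorm (vsub x y).

Definition argmin_g {n} (g : vec n -> option R) (c k : R) (w u : vec n) : Prop :=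
  exists gu, g u = Some gu /\
  forall v gv, g v = Some gv ->
    c * gu + k * (vnorm (vsub u w)) ^ 2 <= c * gv + k * (vnorm (vsub v w)) ^ 2.

Definition PR_iteration {n} (f : vec n -> R) (g : vec n -> option R) (gamma : R)
    (y z x : nat -> vec n) : Prop :=
  forall t : nat,
    (forall v, f (y (S t)) + / (2 * gamma) * (vnorm (vsub (y (S t)) (x t))) ^ 2
               <= f v + / (2 * gamma) * (vnorm (vsub v (x t))) ^ 2) /\
    argmin_g g 1 (/ (2 * gamma)) (vsub (vscal 2 (y (S t))) (x t)) (z (S t)) /\
    x (S t) = vadd (x t) (vscal 2 (vsub (z (S t)) (y (S t)))).

Definition Pgamma {n} (f : vec n -> R) (g : vec n -> option R) (gamma : R)
    (w : triple n) : option R :=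
  let '(y, z, x) := w in
  match g z with
  | None => None
  | Some gz => Some (f y + gz - 3 / (2 * gamma) * (vnorm (vsub y z)) ^ 2
                     + / gamma * vdot (vsub x y) (vsub z y))
  end.

(* Main.v *)
Require Import Defs.
From Stdlib Require Import Reals Lra Psatz FunctionalExtensionality IndefiniteDescription.
Open Scope R_scope.

Lemma fsum_ext n (F G : Fin.t n -> R) : (forall i, F i = G i) -> fsum n F = fsum n G.
Proof. induction n; simpl; intros H; [reflexivity|]. rewrite H, (IHn _ (fun i => G (Fin.FS i))); auto. Qed.

Lemma fsum_add n (F G : Fin.t n -> R) : fsum n (fun i => F i + G i) = fsum n F + fsum n G.
Proof. induction n; simpl; [lra|]. rewrite (IHn (fun i => F (Fin.FS i)) (fun i => G (Fin.FS i))). lra. Qed.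

Lemma fsum_scal n c (F : Fin.t n -> R) : fsum n (fun i => c * F i) = c * fsum n F.
Proof. induction n; simpl; [lra|]. rewrite (IHn (fun i => F (Fin.FS i))). lra. Qed.

Lemma fsum_nonneg n (F : Fin.t n -> R) : (forall i, 0 <= F i) -> 0 <= fsum n F.
Proof. induction n; simpl; intros H; [lra|]. specialize (IHn (fun i => F (Fin.FS i))). 
  assert (0 <= F Fin.F1) by apply H. assert (0 <= fsum n (fun i => F (Fin.FS i))) by (apply IHn; auto). lra. Qed.

Lemma fsum_eq0 n (F : Fin.t n -> R) : (forall i, 0 <= F i) -> fsum n F = 0 -> forall i, F i = 0.
Proof. induction n; simpl; intros H H0 i.
  - inversion i.
  - assert (0 <= F Fin.F1) by apply H.
    assert (0 <= fsum n (fun i => F (Fin.FS i))) by (apply fsum_nonneg; auto).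
    pattern i; apply Fin.caseS'.
    + lra.
    + intro p. apply (IHn (fun i => F (Fin.FS i))); auto. lra. Qed.

Lemma vdot_comm n (a b : vec n) : vdot a b = vdot b a.
Proof. unfold vdot. apply fsum_ext. intros; ring. Qed.
Lemma vdot_addl n (a b c : vec n) : vdot (vadd a b) c = vdot a c + vdot b c.
Proof. unfold vdot, vadd. rewrite <- fsum_add. apply fsum_ext; intros; ring. Qed.
Lemma fsum_sub n (F G : Fin.t n -> R) : fsum n (fun i => F i - G i) = fsum n F - fsum n G.
Proof. induction n; simpl; [lra|]. rewrite (IHn (fun i => F (Fin.FS i)) (fun i => G (Fin.FS i))). lra. Qed.
Lemma vdot_subl n (a b c : vec n) : vdot (vsub a b) c = vdot a c - vdot b c.
Proof. unfold vdot, vsub. rewrite <- fsum_sub. apply fsum_ext; intros; ring. Qed.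
Lemma vdot_scall n k (a c : vec n) : vdot (vscal k a) c = k * vdot a c.
Proof. unfold vdot, vscal. rewrite <- fsum_scal. apply fsum_ext; intros; ring. Qed.
Lemma vdot_addr n (a b c : vec n) : vdot c (vadd a b) = vdot c a + vdot c b.
Proof. rewrite !(vdot_comm n c). apply vdot_addl. Qed.
Lemma vdot_subr n (a b c : vec n) : vdot c (vsub a b) = vdot c a - vdot c b.
Proof. rewrite !(vdot_comm n c). apply vdot_subl. Qed.
Lemma vdot_scalr n k (a c : vec n) : vdot c (vscal k a) = k * vdot c a.
Proof. rewrite !(vdot_comm n c). apply vdot_scall. Qed.
Lemma vdot_nonneg n (a : vec n) : 0 <= vdot a a.
Proof. unfold vdot. apply fsum_nonneg. intros; nra. Qed.

Ltac vexp := repeat rewrite ?vdot_addl, ?vdot_addr, ?vdot_subl, ?vdot_subr, ?vdot_scall, ?vdot_scalr.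
Ltac vexpH H := repeat rewrite ?vdot_addl, ?vdot_addr, ?vdot_subl, ?vdot_subr, ?vdot_scall, ?vdot_scalr in H.

Lemma vec_eq n (a b : vec n) : vdot (vsub a b) (vsub a b) = 0 -> a = b.
Proof. intros H. apply functional_extensionality. intro i.
  unfold vdot in H. assert (Hp: forall i, 0 <= vsub a b i * vsub a b i) by (intro j; nra).
  pose proof (fsum_eq0 n _ Hp H i) as Hi.
  unfold vsub in Hi. nra. Qed.

Lemma vnorm_sq n (a : vec n) : vnorm a ^ 2 = vdot a a.
Proof. unfold vnorm. rewrite pow2_sqrt; auto using vdot_nonneg. Qed.
Lemma vnorm_nonneg n (a : vec n) : 0 <= vnorm a.
Proof. unfold vnorm; apply sqrt_pos. Qed.

Lemma CS2 n (a b : vec n) : (vdot a b)^2 <= vdot a a * vdot b b.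
Proof.
  assert (H : forall t, 0 <= vdot a a - 2 * t * vdot a b + t^2 * vdot b b).
  { intro t. pose proof (vdot_nonneg n (vsub a (vscal t b))) as H. vexpH H.
    rewrite (vdot_comm n b a) in H. nra. }
  pose proof (vdot_nonneg n a). pose proof (vdot_nonneg n b).
  destruct (Req_dec (vdot b b) 0) as [E|E].
  - rewrite E. destruct (Req_dec (vdot a b) 0) as [E2|E2]. rewrite E2; nra.
    specialize (H ((vdot a a + 1) / (2 * vdot a b))). rewrite E in H.
    replace (vdot a a - 2 * ((vdot a a + 1) / (2 * vdot a b)) * vdot a b + ((vdot a a + 1) / (2 * vdot a b)) ^ 2 * 0) with (-1) in H by (field; auto). lra.
  - specialize (H (vdot a b / vdot b b)).
    assert (0 < vdot b b) by lra.
    replace (vdot a a - 2 * (vdot a b / vdot b b) * vdot a b + (vdot a b / vdot b b) ^ 2 * vdot b b)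
      with (vdot a a - (vdot a b)^2 / vdot b b) in H by (field; lra).
    apply Rmult_le_reg_r with (/ vdot b b). apply Rinv_0_lt_compat; lra.
    replace (vdot a a * vdot b b * / vdot b b) with (vdot a a) by (field; lra).
    unfold Rdiv in H. lra. Qed.

Lemma CS n (a b : vec n) : Rabs (vdot a b) <= vnorm a * vnorm b.
Proof. unfold vnorm. rewrite <- sqrt_mult by apply vdot_nonneg.
  rewrite <- sqrt_Rsqr_abs. apply sqrt_le_1_alt. unfold Rsqr. pose proof (CS2 n a b). nra. Qed.

Lemma vnorm_le_sq n (a : vec n) r : 0 <= r -> vdot a a <= r^2 -> vnorm a <= r.
Proof. intros. unfold vnorm. rewrite <- (sqrt_pow2 r) by auto. apply sqrt_le_1_alt; auto. Qed.

Lemma vnorm_add n (a b : vec n) : vnorm (vadd a b) <= vnorm a + vnorm b.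
Proof. apply vnorm_le_sq. pose proof (vnorm_nonneg n a); pose proof (vnorm_nonneg n b); lra.
  vexp. pose proof (CS n a b). pose proof (Rle_abs (vdot a b)).
  rewrite (vdot_comm n b a). rewrite <- (vnorm_sq n a), <- (vnorm_sq n b). nra. Qed.

Lemma vsub_split n (a b c : vec n) : vsub a c = vadd (vsub a b) (vsub b c).
Proof. apply functional_extensionality; intro i; unfold vsub, vadd; ring. Qed.

Lemma vnorm_tri n (a b c : vec n) : vnorm (vsub a c) <= vnorm (vsub a b) + vnorm (vsub b c).
Proof. rewrite (vsub_split n a b c). apply vnorm_add. Qed.

Lemma vnorm_scal n k (a : vec n) : vnorm (vscal k a) = Rabs k * vnorm a.
Proof. unfold vnorm. rewrite vdot_scall, vdot_scalr. rewrite <- Rmult_assoc.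
  rewrite sqrt_mult_alt by nra. f_equal. rewrite <- sqrt_Rsqr_abs. reflexivity. Qed.

Lemma vnorm_sym n (a b : vec n) : vnorm (vsub a b) = vnorm (vsub b a).
Proof. unfold vnorm. f_equal. vexp. rewrite (vdot_comm n a b). ring. Qed.

Lemma vnorm_zero n (a : vec n) : vnorm (vsub a a) = 0.
Proof. unfold vnorm. vexp. replace (vdot a a - vdot a a - (vdot a a - vdot a a)) with 0 by ring. apply sqrt_0. Qed.

Lemma Rabs_def2b x a : Rabs x <= a -> - a <= x <= a.
Proof. unfold Rabs. destruct (Rcase_abs x); lra. Qed.

Lemma le_eps A : (forall e, e > 0 -> A <= e) -> A <= 0.
Proof. intros H. destruct (Rle_lt_dec A 0); auto. specialize (H (A/2)). lra. Qed.

Lemma vsub_shift n (y d : vec n) t : vsub (vadd y (vscal t d)) y = vscal t d.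
Proof. apply functional_extensionality; intro i; unfold vsub, vadd, vscal; ring. Qed.

Lemma grad_dir n (f : vec n -> R) df : is_gradient f df ->
  forall y d eps, eps > 0 -> exists t0, t0 > 0 /\ forall t, 0 < t <= t0 ->
   Rabs (f (vadd y (vscal t d)) - f y - t * vdot (df y) d) <= eps * t.
Proof.
  intros Hg y d eps Heps. pose proof (vnorm_nonneg n d) as Hd.
  destruct (Hg y (eps / (vnorm d + 1))) as [delta [Hdel H]].
  { apply Rdiv_lt_0_compat; lra. }
  exists (delta / (vnorm d + 1) / 2). split. { apply Rdiv_lt_0_compat; [apply Rdiv_lt_0_compat|]; lra. }
  intros t Ht. specialize (H (vadd y (vscal t d))). rewrite vsub_shift, vnorm_scal, vdot_scalr in H.
  rewrite Rabs_right in H by lra.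
  assert (t * vnorm d < delta).
  { assert (t * (vnorm d + 1) <= delta / 2).
    { destruct Ht as [_ Ht]. apply Rmult_le_compat_r with (r := vnorm d + 1) in Ht; [|lra].
      replace (delta / (vnorm d + 1) / 2 * (vnorm d + 1)) with (delta/2) in Ht by (field; lra). lra. }
    nra. }
  specialize (H H0).
  eapply Rle_trans; [apply H|].
  assert (eps / (vnorm d + 1) * vnorm d <= eps).
  { apply Rmult_le_reg_r with (vnorm d + 1); [lra|].
    replace (eps / (vnorm d + 1) * vnorm d * (vnorm d + 1)) with (eps * vnorm d) by (field; lra). nra. }
  nra.
Qed.

Lemma sq_shift n (a b d : vec n) t :
  vdot (vsub (vadd a (vscal t d)) b) (vsub (vadd a (vscal t d)) b)
  = vdot (vsub a b) (vsub a b) + 2 * t * vdot (vsub a b) d + t^2 * vdot d d.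
Proof. replace (vsub (vadd a (vscal t d)) b) with (vadd (vsub a b) (vscal t d))
   by (apply functional_extensionality; intro i; unfold vsub, vadd, vscal; ring).
  vexp. rewrite (vdot_comm n d a), (vdot_comm n d b). ring. Qed.

Lemma strong_grad n (f : vec n -> R) df sigma : is_gradient f df -> strongly_convex f sigma -> 0 < sigma ->
  forall y u, f u >= f y + vdot (df y) (vsub u y) + sigma / 2 * vdot (vsub u y) (vsub u y).
Proof.
  intros Hg Hc Hs y u. set (d := vsub u y).
  set (Q := f u - f y - vdot (df y) d - sigma / 2 * vdot d d).
  cut (- Q <= 0). { unfold Q. lra. }
  apply le_eps. intros e He.
  destruct (grad_dir n f df Hg y d (e/2) ltac:(lra)) as [t0 [Ht0 H]].
  pose proof (vdot_nonneg n d) as Hdd.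
  set (t := Rmin t0 (Rmin 1 (e / (sigma * vdot d d + 1)))).
  assert (Htp : 0 < t).
  { unfold t. apply Rmin_pos; auto. apply Rmin_pos; [lra|]. apply Rdiv_lt_0_compat; nra. }
  assert (Ht1 : t <= t0) by apply Rmin_l.
  assert (Ht2 : t <= 1) by (unfold t; eapply Rle_trans; [apply Rmin_r|apply Rmin_l]).
  assert (Ht3 : t * (sigma * vdot d d + 1) <= e).
  { assert (t <= e / (sigma * vdot d d + 1)) by (unfold t; eapply Rle_trans; [apply Rmin_r|apply Rmin_r]).
    apply Rmult_le_compat_r with (r := sigma * vdot d d + 1) in H0; [|nra].
    replace (e / (sigma * vdot d d + 1) * (sigma * vdot d d + 1)) with e in H0 by (field; nra). lra. }
  specialize (H t (conj Htp Ht1)). apply Rabs_def2b in H.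
  specialize (Hc u y t (conj (Rlt_le _ _ Htp) Ht2)). cbv beta in Hc.
  replace (vadd (vscal t u) (vscal (1 - t) y)) with (vadd y (vscal t d)) in Hc
    by (apply functional_extensionality; intro i; unfold d, vsub, vadd, vscal; ring).
  rewrite !vnorm_sq in Hc.
  replace (vdot (vadd y (vscal t d)) (vadd y (vscal t d))) with
    (vdot y y + 2 * t * vdot y d + t^2 * vdot d d) in Hc by (vexp; rewrite (vdot_comm n d y); ring).
  replace (vdot u u) with (vdot y y + 2 * vdot y d + vdot d d) in Hc.
  2:{ replace u with (vadd y d) at 1 2 by (apply functional_extensionality; intro i; unfold d, vsub, vadd; ring).
      vexp. rewrite (vdot_comm n d y). ring. }
  assert (t * (- Q) <= t * e) by (unfold Q; nra).
  apply Rmult_le_reg_l in H0; auto.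
Qed.

Lemma strong_mono n (f : vec n -> R) df sigma : is_gradient f df -> strongly_convex f sigma -> 0 < sigma ->
  forall a b, vdot (vsub (df a) (df b)) (vsub a b) >= sigma * vdot (vsub a b) (vsub a b).
Proof. intros Hg Hc Hs a b.
  pose proof (strong_grad n f df sigma Hg Hc Hs a b) as H1.
  pose proof (strong_grad n f df sigma Hg Hc Hs b a) as H2.
  vexpH H1. vexpH H2. vexp. rewrite (vdot_comm n b a) in *. lra. Qed.

Lemma sigma_le_L n (f : vec n -> R) df sigma L : is_gradient f df -> strongly_convex f sigma -> 0 < sigma ->
  lipschitz df L -> (0 < n)%nat -> sigma <= L.
Proof. intros Hg Hc Hs HL Hn.
  set (a := fun _ : Fin.t n => 1). set (b := fun _ : Fin.t n => 0).
  assert (Hab : 0 < vdot (vsub a b) (vsub a b)).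
  { destruct n; [lia|]. unfold vdot; cbn [fsum].
    assert (0 <= fsum n (fun i => vsub a b (Fin.FS i) * vsub a b (Fin.FS i))) by (apply fsum_nonneg; intros; nra).
    change (vsub a b Fin.F1) with (1 - 0). lra. }
  pose proof (strong_mono n f df sigma Hg Hc Hs a b) as H1.
  pose proof (CS n (vsub (df a) (df b)) (vsub a b)) as H2.
  pose proof (HL a b) as H3. pose proof (Rle_abs (vdot (vsub (df a) (df b)) (vsub a b))).
  pose proof (vnorm_nonneg n (vsub a b)). pose proof (vnorm_nonneg n (vsub (df a) (df b))).
  rewrite <- vnorm_sq in H1, Hab.
  assert (sigma * vnorm (vsub a b) ^ 2 <= L * vnorm (vsub a b) ^ 2) by nra.
  nra. Qed.

Lemma opt_y n (f : vec n -> R) df gamma (y1 x0 : vec n) : is_gradient f df -> 0 < gamma ->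
  (forall v, f y1 + / (2 * gamma) * (vnorm (vsub y1 x0)) ^ 2 <= f v + / (2 * gamma) * (vnorm (vsub v x0)) ^ 2) ->
  df y1 = vscal (/ gamma) (vsub x0 y1).
Proof.
  intros Hg Hgam Hmin.
  set (G := vadd (df y1) (vscal (/ gamma) (vsub y1 x0))).
  assert (HGG : vdot G G <= 0).
  { apply le_eps. intros e He. set (d := vscal (-1) G).
    destruct (grad_dir n f df Hg y1 d (e/2) ltac:(lra)) as [t0 [Ht0 H]].
    pose proof (vdot_nonneg n d) as Hdd.
    set (t := Rmin t0 (e / 2 / (/ (2 * gamma) * vdot d d + 1))).
    assert (Htp : 0 < t).
    { unfold t. apply Rmin_pos; auto. apply Rdiv_lt_0_compat; [lra|].
      assert (0 < / (2*gamma)) by (apply Rinv_0_lt_compat; lra). nra. }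
    assert (Ht1 : t <= t0) by apply Rmin_l.
    assert (0 < / (2*gamma)) by (apply Rinv_0_lt_compat; lra).
    assert (Ht3 : t * (/ (2 * gamma) * vdot d d + 1) <= e / 2).
    { assert (t <= e / 2 / (/ (2 * gamma) * vdot d d + 1)) by (unfold t; apply Rmin_r).
      apply Rmult_le_compat_r with (r := / (2 * gamma) * vdot d d + 1) in H1; [|nra].
      replace (e / 2 / (/ (2 * gamma) * vdot d d + 1) * (/ (2 * gamma) * vdot d d + 1)) with (e/2) in H1 by (field; nra). lra. }
    specialize (H t (conj Htp Ht1)). apply Rabs_def2b in H.
    specialize (Hmin (vadd y1 (vscal t d))). rewrite !vnorm_sq, sq_shift in Hmin.
    assert (Hid : vdot (df y1) d + 2 * / (2 * gamma) * vdot (vsub y1 x0) d = - vdot G G).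
    { unfold d, G. vexp. field. lra. }
    assert (Hk: t * (vdot (df y1) d + 2 * / (2 * gamma) * vdot (vsub y1 x0) d) >= t * (- e / 2 - / (2 * gamma) * t * vdot d d)) by nra.
    apply Rmult_ge_compat_l with (r := / t) in Hk; [|apply Rle_ge; left; apply Rinv_0_lt_compat; lra].
    rewrite <- !Rmult_assoc, Rinv_l, !Rmult_1_l in Hk by lra. rewrite Hid in Hk. nra. }
  apply vec_eq. pose proof (vdot_nonneg n G).
  replace (vsub (df y1) (vscal (/ gamma) (vsub x0 y1))) with G.
  lra. apply functional_extensionality; intro i; unfold G, vsub, vadd, vscal; ring.
Qed.

Lemma sqrt_le_r A r : 0 <= r -> A <= r ^ 2 -> sqrt A <= r.
Proof. intros. rewrite <- (sqrt_pow2 r) by auto. apply sqrt_le_1_alt; auto. Qed.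

Lemma cv_bound (u e : nat -> R) l : (exists N, forall j, (j >= N)%nat -> Rabs (u j - l) <= e j) -> Un_cv e 0 -> Un_cv u l.
Proof. intros [N0 HN] He eps Heps. destruct (He eps Heps) as [N1 H1]. exists (max N0 N1). intros j Hj.
  unfold Rdist in *. specialize (H1 j ltac:(lia)). specialize (HN j ltac:(lia)).
  rewrite Rminus_0_r in H1. pose proof (Rle_abs (e j)). lra. Qed.

Lemma cv_const c : Un_cv (fun _ => c) c.
Proof. intros eps He. exists 0%nat. intros. unfold Rdist. rewrite Rminus_diag, Rabs_R0. lra. Qed.

Lemma cv_tail (u : nat -> R) l m : Un_cv u l -> Un_cv (fun j => u (j + m)%nat) l.
Proof. intros H eps He. destruct (H eps He) as [N HN]. exists N. intros j Hj. apply HN. lia. Qed.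

Lemma cv_sub0 (u : nat -> R) l : Un_cv u l -> Un_cv (fun j => u j - l) 0.
Proof. intros H eps He. destruct (H eps He) as [N HN]. exists N. intros j Hj. unfold Rdist in *.
  rewrite Rminus_0_r. apply HN; auto. Qed.

Definition vconv {n} (a : nat -> vec n) (l : vec n) := Un_cv (fun j => vnorm (vsub (a j) l)) 0.

Lemma vconv_sub n (a b : nat -> vec n) la lb : vconv a la -> vconv b lb -> vconv (fun j => vsub (a j) (b j)) (vsub la lb).
Proof. intros Ha Hb. unfold vconv. apply cv_bound with (e := fun j => vnorm (vsub (a j) la) + vnorm (vsub (b j) lb)).
  - exists 0%nat. intros j _. rewrite Rminus_0_r. rewrite Rabs_right by (apply Rle_ge, vnorm_nonneg).
    replace (vsub (vsub (a j) (b j)) (vsub la lb)) with (vadd (vsub (a j) la) (vscal (-1) (vsub (b j) lb)))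
      by (apply functional_extensionality; intro i; unfold vadd, vscal, vsub; ring).
    eapply Rle_trans; [apply vnorm_add|]. rewrite vnorm_scal. replace (Rabs (-1)) with 1 by (rewrite Rabs_left; lra). lra.
  - replace 0 with (0 + 0) by ring. apply CV_plus; auto. Qed.

Lemma vconv_scal n (a : nat -> vec n) la k : vconv a la -> vconv (fun j => vscal k (a j)) (vscal k la).
Proof. intros Ha. unfold vconv. apply cv_bound with (e := fun j => Rabs k * vnorm (vsub (a j) la)).
  - exists 0%nat. intros j _. rewrite Rminus_0_r. rewrite Rabs_right by (apply Rle_ge, vnorm_nonneg).
    replace (vsub (vscal k (a j)) (vscal k la)) with (vscal k (vsub (a j) la))
      by (apply functional_extensionality; intro i; unfold vadd, vscal, vsub; ring).
    rewrite vnorm_scal. lra.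
  - replace 0 with (Rabs k * 0) by ring. apply CV_mult; auto. apply cv_const. Qed.

Lemma vconv_const n (c : vec n) : vconv (fun _ => c) c.
Proof. unfold vconv. rewrite vnorm_zero. apply cv_const. Qed.

Lemma vdot_conv n (a b : nat -> vec n) la lb : vconv a la -> vconv b lb -> Un_cv (fun j => vdot (a j) (b j)) (vdot la lb).
Proof. intros Ha Hb.
  apply cv_bound with (e := fun j => vnorm (vsub (a j) la) * (vnorm lb + vnorm (vsub (b j) lb)) + vnorm la * vnorm (vsub (b j) lb)).
  - exists 0%nat. intros j _.
    replace (vdot (a j) (b j) - vdot la lb) with (vdot (vsub (a j) la) (b j) + vdot la (vsub (b j) lb)) by (vexp; ring).
    eapply Rle_trans; [apply Rabs_triang|].
    pose proof (CS n (vsub (a j) la) (b j)). pose proof (CS n la (vsub (b j) lb)).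
    assert (vnorm (b j) <= vnorm lb + vnorm (vsub (b j) lb)).
    { replace (b j) with (vadd lb (vsub (b j) lb)) at 1 by (apply functional_extensionality; intro i; unfold vadd, vsub; ring). apply vnorm_add. }
    pose proof (vnorm_nonneg n (vsub (a j) la)). nra.
  - replace 0 with (0 * (vnorm lb + 0) + vnorm la * 0) by ring.
    repeat first [assumption | apply CV_plus | apply CV_mult | apply cv_const]. Qed.

Lemma f_conv n (f : vec n -> R) df (a : nat -> vec n) la : is_gradient f df -> vconv a la -> Un_cv (fun j => f (a j)) (f la).
Proof. intros Hg Ha. destruct (Hg la 1 ltac:(lra)) as [dl [Hdl H]].
  apply cv_bound with (e := fun j => (vnorm (df la) + 1) * vnorm (vsub (a j) la)).
  - destruct (Ha dl Hdl) as [N HN]. exists N. intros j Hj. specialize (HN j Hj). unfold Rdist in HN.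
    rewrite Rminus_0_r, Rabs_right in HN by (apply Rle_ge, vnorm_nonneg).
    specialize (H (a j) HN). pose proof (CS n (df la) (vsub (a j) la)).
    pose proof (Rabs_triang (f (a j) - f la - vdot (df la) (vsub (a j) la)) (vdot (df la) (vsub (a j) la))).
    replace (f (a j) - f la - vdot (df la) (vsub (a j) la) + vdot (df la) (vsub (a j) la)) with (f (a j) - f la) in H1 by ring.
    lra.
  - replace 0 with ((vnorm (df la) + 1) * 0) by ring. apply CV_mult; auto. apply cv_const. Qed.

Lemma vnorm_le_enorm n (a b c la lb lc : vec n) :
  vnorm (vsub a la) <= enorm (@tdot n) (tsub (a, b, c) (la, lb, lc)) /\
  vnorm (vsub b lb) <= enorm (@tdot n) (tsub (a, b, c) (la, lb, lc)) /\
  vnorm (vsub c lc) <= enorm (@tdot n) (tsub (a, b, c) (la, lb, lc)).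
Proof. unfold enorm, tdot, tsub, vnorm. cbv beta iota.
  pose proof (vdot_nonneg n (vsub a la)). pose proof (vdot_nonneg n (vsub b lb)). pose proof (vdot_nonneg n (vsub c lc)).
  repeat split; apply sqrt_le_1_alt; lra. Qed.

Lemma enorm_le_sum n (a b c la lb lc : vec n) :
  enorm (@tdot n) (tsub (a, b, c) (la, lb, lc)) <= vnorm (vsub a la) + vnorm (vsub b lb) + vnorm (vsub c lc).
Proof. unfold enorm, tdot, tsub. cbv beta iota. apply sqrt_le_r.
  pose proof (vnorm_nonneg n (vsub a la)). pose proof (vnorm_nonneg n (vsub b lb)). pose proof (vnorm_nonneg n (vsub c lc)). lra.
  rewrite <- !vnorm_sq.
  pose proof (vnorm_nonneg n (vsub a la)). pose proof (vnorm_nonneg n (vsub b lb)). pose proof (vnorm_nonneg n (vsub c lc)). nra. Qed.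

Lemma cv_squeeze (u e : nat -> R) : (forall j, 0 <= u j <= e j) -> Un_cv e 0 -> Un_cv u 0.
Proof. intros H He. apply cv_bound with e; auto. exists 0%nat; intros j _. rewrite Rminus_0_r, Rabs_right; [apply H|apply Rle_ge, H]. Qed.


Fixpoint psum (e : nat -> R) (m : nat) : R := match m with O => 0 | S m => psum e m + e m end.

Lemma psum_mono e : (forall i, 0 <= e i) -> forall p k, psum e p <= psum e (k + p).
Proof. intros He p k. induction k; simpl; [lra|]. specialize (He (k + p)%nat). lra. Qed.

Lemma tele n (a : nat -> vec n) (u : nat -> R) : (forall i, vnorm (vsub (a (S i)) (a i)) <= u (S i) - u i) ->
  forall p k, vnorm (vsub (a (k + p)%nat) (a p)) <= u (k + p)%nat - u p.
Proof. intros H p k. induction k; simpl.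
  - rewrite vnorm_zero. lra.
  - pose proof (vnorm_tri n (a (S (k + p))) (a (k + p)%nat) (a p)). specialize (H (k + p)%nat). lra. Qed.

Lemma tele_fwd n (a : nat -> vec n) (u : nat -> R) l : (forall i, vnorm (vsub (a (S i)) (a i)) <= u (S i) - u i) ->
  forall m, vnorm (vsub (a m) l) <= vnorm (vsub (a 0%nat) l) + (u m - u 0%nat).
Proof. intros H m. pose proof (tele n a u H 0 m) as T. rewrite Nat.add_0_r in T.
  pose proof (vnorm_tri n (a m) (a 0%nat) l). lra. Qed.

Lemma tele_bwd n (a : nat -> vec n) (u : nat -> R) l : (forall i, vnorm (vsub (a (S i)) (a i)) <= u (S i) - u i) ->
  forall p k, vnorm (vsub (a p) l) <= vnorm (vsub (a (k + p)%nat) l) + (u (k + p)%nat - u p).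
Proof. intros H p k. pose proof (tele n a u H p k) as T.
  pose proof (vnorm_tri n (a p) (a (k + p)%nat) l). rewrite vnorm_sym in T. lra. Qed.

Lemma Rdiv_le_0_compat a b : 0 <= a -> 0 < b -> 0 <= a / b.
Proof. intros. unfold Rdiv. apply Rmult_le_pos; auto. left; apply Rinv_0_lt_compat; auto. Qed.

Ltac comm2 n a b := rewrite ?(vdot_comm n b a).

Lemma Rbound n (hy hz hx : vec n) :
  0 <= -3/2 * vdot (vsub hy hz) (vsub hy hz) + vdot (vsub hx hy) (vsub hz hy) - /2 * vdot hz hz
       + 6 * (vdot hy hy + vdot hz hz + vdot hx hx).
Proof.
  pose proof (vdot_nonneg n (vadd hy hz)). pose proof (vdot_nonneg n (vadd (vsub hx hy) (vsub hz hy))).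
  pose proof (vdot_nonneg n (vadd hx hy)). pose proof (vdot_nonneg n hy).
  pose proof (vdot_nonneg n hz). pose proof (vdot_nonneg n hx).
  vexpH H. vexpH H0. vexpH H1. vexp. comm2 n hy hz. comm2 n hy hx. comm2 n hz hx.
  rewrite ?(vdot_comm n hz hy), ?(vdot_comm n hx hy), ?(vdot_comm n hx hz) in *. lra.
Qed.

Lemma fsum_zero n : fsum n (fun _ => 0) = 0.
Proof. induction n; simpl; auto. rewrite IHn; ring. Qed.
Lemma vdot_zero_l n (a : vec n) : vdot (fun _ => 0) a = 0.
Proof. unfold vdot. rewrite (fsum_ext n _ (fun _ => 0)) by (intros; ring). apply fsum_zero. Qed.

Section PR.
Variable n : nat.
Variables (f : vec n -> R) (df : vec n -> vec n) (g : vec n -> option R) (sigma L gamma : R).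
Variables (y z x : nat -> vec n).
Hypothesis Hg : is_gradient f df.
Hypothesis Hc : strongly_convex f sigma.
Hypothesis Hs : 0 < sigma.
Hypothesis HL : lipschitz df L.
Hypothesis HLp : 0 < L.
Hypothesis Hgam : 0 < gamma.
Hypothesis Hit : PR_iteration f g gamma y z x.

Definition gval (v : vec n) : R := match g v with Some r => r | None => 0 end.
Definition PP (t : nat) : R := f (y t) + gval (z t) - 3 / (2 * gamma) * vnorm (vsub (y t) (z t)) ^ 2
   + / gamma * vdot (vsub (x t) (y t)) (vsub (z t) (y t)).
Definition dd (t : nat) : R := vnorm (vsub (y (S t)) (y t)).
Definition MM : R := 1 + gamma * L.

Lemma xrel t : x t = vadd (y (S t)) (vscal gamma (df (y (S t)))).
Proof. destruct (Hit t) as [H1 _]. rewrite (opt_y n f df gamma (y (S t)) (x t) Hg Hgam H1).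
  apply functional_extensionality; intro i; unfold vadd, vscal, vsub. field. lra. Qed.

Lemma zrel t : z (S t) = vadd (y (S t)) (vscal (/2) (vsub (x (S t)) (x t))).
Proof. destruct (Hit t) as [_ [_ H]]. rewrite H.
  apply functional_extensionality; intro i; unfold vadd, vscal, vsub. field. Qed.

Lemma gsome t : exists r, g (z (S t)) = Some r.
Proof. destruct (Hit t) as [_ [[r [H _]] _]]. eauto. Qed.

Lemma P_some t : Pgamma f g gamma (y (S t), z (S t), x (S t)) = Some (PP (S t)).
Proof. destruct (gsome t) as [r H]. unfold Pgamma, PP, gval. rewrite H. reflexivity. Qed.

Lemma dd_nonneg t : 0 <= dd t.
Proof. apply vnorm_nonneg. Qed.

Lemma dx_bound t : vnorm (vsub (x (S t)) (x t)) <= MM * dd (S t).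
Proof. rewrite (xrel (S t)), (xrel t).
  replace (vsub (vadd (y (S (S t))) (vscal gamma (df (y (S (S t))))))
                (vadd (y (S t)) (vscal gamma (df (y (S t))))))
    with (vadd (vsub (y (S (S t))) (y (S t))) (vscal gamma (vsub (df (y (S (S t)))) (df (y (S t))))))
    by (apply functional_extensionality; intro i; unfold vadd, vscal, vsub; ring).
  eapply Rle_trans; [apply vnorm_add|]. rewrite vnorm_scal, Rabs_right by lra.
  pose proof (HL (y (S (S t))) (y (S t))). unfold MM, dd. nra. Qed.

Lemma dz_bound t : vnorm (vsub (z (S (S t))) (z (S t))) <= dd (S t) + MM / 2 * (dd (S (S t)) + dd (S t)).
Proof. rewrite (zrel (S t)), (zrel t).
  replace (vsub (vadd (y (S (S t))) (vscal (/ 2) (vsub (x (S (S t))) (x (S t)))))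
                (vadd (y (S t)) (vscal (/ 2) (vsub (x (S t)) (x t)))))
    with (vadd (vsub (y (S (S t))) (y (S t))) (vscal (/2) (vadd (vsub (x (S (S t))) (x (S t))) (vscal (-1) (vsub (x (S t)) (x t))))))
    by (apply functional_extensionality; intro i; unfold vadd, vscal, vsub; ring).
  eapply Rle_trans; [apply vnorm_add|]. rewrite vnorm_scal, Rabs_right by lra.
  pose proof (vnorm_add n (vsub (x (S (S t))) (x (S t))) (vscal (-1) (vsub (x (S t)) (x t)))).
  rewrite vnorm_scal in H. replace (Rabs (-1)) with 1 in H by (rewrite Rabs_left; lra).
  pose proof (dx_bound (S t)). pose proof (dx_bound t). change (vnorm (vsub (y (S (S t))) (y (S t)))) with (dd (S t)). lra. Qed.

Lemma gap_sq : forall a b : vec n, vnorm (vsub (df a) (df b)) ^ 2 <= L ^ 2 * vnorm (vsub a b) ^ 2.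
Proof. intros a b. pose proof (HL a b). pose proof (vnorm_nonneg n (vsub (df a) (df b))).
  pose proof (vnorm_nonneg n (vsub a b)). nra. Qed.

Lemma descent t : PP (S (S t)) <= PP (S t) - (sigma - gamma * L ^ 2) / 2 * dd (S t) ^ 2.
Proof.
  destruct (Hit (S t)) as [_ [[gz1 [Hgz1 Hz]] Hx2]].
  destruct (gsome t) as [gz Hgz].
  specialize (Hz (z (S t)) gz Hgz).
  pose proof (strong_grad n f df sigma Hg Hc Hs (y (S (S t))) (y (S t))) as Hsc.
  pose proof (gap_sq (y (S (S t))) (y (S t))) as Hlip.
  assert (E : PP (S (S t)) - PP (S t) - ((1 * gz1 + / (2 * gamma) * vnorm (vsub (z (S (S t))) (vsub (vscal 2 (y (S (S t)))) (x (S t)))) ^ 2)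
       - (1 * gz + / (2 * gamma) * vnorm (vsub (z (S t)) (vsub (vscal 2 (y (S (S t)))) (x (S t)))) ^ 2))
       = f (y (S (S t))) - f (y (S t)) - vdot (df (y (S (S t)))) (vsub (y (S (S t))) (y (S t)))
         + gamma / 2 * vnorm (vsub (df (y (S (S t)))) (df (y (S t)))) ^ 2).
  { unfold PP, gval. rewrite Hgz1, Hgz. rewrite !vnorm_sq. rewrite Hx2. rewrite (zrel t).
    rewrite (xrel (S t)), (xrel t).
    set (Y := y (S t)). set (Y1 := y (S (S t))). set (G := df Y). set (G1 := df Y1). set (Z1 := z (S (S t))).
    vexp. comm2 n Y Y1. comm2 n Y G. comm2 n Y G1. comm2 n Y Z1. comm2 n Y1 G. comm2 n Y1 G1.
    comm2 n Y1 Z1. comm2 n G G1. comm2 n G Z1. comm2 n G1 Z1. field. lra. }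
  unfold dd. rewrite !vnorm_sq in Hlip. rewrite !vnorm_sq. rewrite !vnorm_sq in E.
  replace (vsub (y (S t)) (y (S (S t)))) with (vscal (-1) (vsub (y (S (S t))) (y (S t)))) in Hsc
    by (apply functional_extensionality; intro i; unfold vscal, vsub; ring).
  rewrite !vdot_scall, !vdot_scalr in Hsc.
  rewrite !vnorm_sq in Hz.
  assert (gamma / 2 * vdot (vsub (df (y (S (S t)))) (df (y (S t)))) (vsub (df (y (S (S t)))) (df (y (S t))))
     <= gamma / 2 * (L ^ 2 * vdot (vsub (y (S (S t))) (y (S t))) (vsub (y (S (S t))) (y (S t))))).
  { apply Rmult_le_compat_l; lra. }
  lra.
Qed.

Definition vvec (t : nat) : triple n :=
  ((fun _ => 0), vscal (/ gamma) (vsub (x t) (x (S t))), vscal (/ (2 * gamma)) (vsub (x (S t)) (x t))).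

Lemma frechet t : frechet_subgrad (@tdot n) (@tsub n) (Pgamma f g gamma) (y (S t), z (S t), x (S t)) (vvec t).
Proof.
  exists (PP (S t)); split; [apply P_some|].
  intros eps He. exists (eps * gamma / 6). split; [apply Rdiv_lt_0_compat; nra|].
  intros [[uy uz] ux] Hu. unfold Pgamma.
  destruct (g uz) as [guz|] eqn:Eg; [|trivial].
  destruct (Hit t) as [Hy [[gZ [HgZ Hz]] HX]].
  specialize (Hz uz guz Eg).
  pose proof (opt_y n f df gamma (y (S t)) (x t) Hg Hgam Hy) as Hdf.
  pose proof (strong_grad n f df sigma Hg Hc Hs (y (S t)) uy) as Hf.
  pose proof (vdot_nonneg n (vsub uy (y (S t)))).
  unfold enorm, tdot, tsub, vvec in *. cbv beta iota in *.
  set (T := vdot (vsub uy (y (S t))) (vsub uy (y (S t))) + vdot (vsub uz (z (S t))) (vsub uz (z (S t)))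
            + vdot (vsub ux (x (S t))) (vsub ux (x (S t)))) in *.
  pose proof (Rbound n (vsub uy (y (S t))) (vsub uz (z (S t))) (vsub ux (x (S t)))) as HR.
  fold T in HR. 
  assert (HT : 0 <= T) by (unfold T; pose proof (vdot_nonneg n (vsub uz (z (S t)))); pose proof (vdot_nonneg n (vsub ux (x (S t)))); lra).
  assert (E : f uy + guz - 3 / (2 * gamma) * vnorm (vsub uy uz) ^ 2 + / gamma * vdot (vsub ux uy) (vsub uz uy)
     - PP (S t) - (vdot (fun _ : Fin.t n => 0) (vsub uy (y (S t))) + vdot (vscal (/ gamma) (vsub (x t) (x (S t)))) (vsub uz (z (S t)))
        + vdot (vscal (/ (2 * gamma)) (vsub (x (S t)) (x t))) (vsub ux (x (S t))))
     = (f uy - f (y (S t)) - vdot (df (y (S t))) (vsub uy (y (S t))))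
       + ((1 * guz + / (2 * gamma) * vnorm (vsub uz (vsub (vscal 2 (y (S t))) (x t))) ^ 2)
          - (1 * gZ + / (2 * gamma) * vnorm (vsub (z (S t)) (vsub (vscal 2 (y (S t))) (x t))) ^ 2))
       + / gamma * (-3/2 * vdot (vsub (vsub uy (y (S t))) (vsub uz (z (S t)))) (vsub (vsub uy (y (S t))) (vsub uz (z (S t))))
           + vdot (vsub (vsub ux (x (S t))) (vsub uy (y (S t)))) (vsub (vsub uz (z (S t))) (vsub uy (y (S t))))
           - /2 * vdot (vsub uz (z (S t))) (vsub uz (z (S t))))).
  { unfold PP, gval. rewrite HgZ. rewrite !vnorm_sq. rewrite Hdf. rewrite HX.
    assert (Z0 : vdot (fun _ : Fin.t n => 0) (vsub uy (y (S t))) = 0).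
    { unfold vdot. rewrite (fsum_ext n _ (fun _ => 0 * 0)) by (intros; ring).
      rewrite (fsum_scal n 0 (fun _ => 0)). ring. }
    rewrite Z0.
    set (Y := y (S t)). set (Z := z (S t)). set (X0 := x t).
    vexp. comm2 n Y Z. comm2 n Y X0. comm2 n Y uy. comm2 n Y uz. comm2 n Y ux.
    comm2 n Z X0. comm2 n Z uy. comm2 n Z uz. comm2 n Z ux. comm2 n X0 uy. comm2 n X0 uz. comm2 n X0 ux.
    comm2 n uy uz. comm2 n uy ux. comm2 n uz ux. field. lra. }
  assert (Hq : / gamma * (-3/2 * vdot (vsub (vsub uy (y (S t))) (vsub uz (z (S t)))) (vsub (vsub uy (y (S t))) (vsub uz (z (S t))))
           + vdot (vsub (vsub ux (x (S t))) (vsub uy (y (S t)))) (vsub (vsub uz (z (S t))) (vsub uy (y (S t))))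
           - /2 * vdot (vsub uz (z (S t))) (vsub uz (z (S t)))) >= - (6 / gamma) * T).
  { assert (0 < / gamma) by (apply Rinv_0_lt_compat; lra). unfold Rdiv. nra. }
  assert (Hsq : (6 / gamma) * T <= eps * sqrt T).
  { assert (sqrt T * sqrt T = T) by (apply sqrt_sqrt; auto).
    pose proof (sqrt_pos T).
    assert (6 / gamma * sqrt T <= eps).
    { apply Rmult_le_reg_r with (gamma / 6); [lra|].
      replace (6 / gamma * sqrt T * (gamma / 6)) with (sqrt T) by (field; lra).
      replace (eps * (gamma / 6)) with (eps * gamma / 6) by field. lra. }
    rewrite <- H0 at 1. nra. }
  assert (0 <= sigma / 2 * vdot (vsub uy (y (S t))) (vsub uy (y (S t)))) by (apply Rmult_le_pos; lra).
  lra.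
Qed.


Lemma vvec_bound t : enorm (@tdot n) (vvec t) <= 2 / gamma * MM * dd (S t).
Proof.
  pose proof (dx_bound t) as H. unfold enorm, tdot, vvec. cbv beta iota.
  rewrite vdot_zero_l. pose proof (vnorm_nonneg n (vsub (x (S t)) (x t))).
  assert (0 < / gamma) by (apply Rinv_0_lt_compat; lra).
  assert (0 <= MM) by (unfold MM; nra).
  apply sqrt_le_r. unfold Rdiv. pose proof (dd_nonneg (S t)).
  apply Rmult_le_pos; [apply Rmult_le_pos|]; lra.
  rewrite !vdot_scall, !vdot_scalr.
  replace (vsub (x t) (x (S t))) with (vscal (-1) (vsub (x (S t)) (x t)))
    by (apply functional_extensionality; intro i; unfold vscal, vsub; ring).
  rewrite !vdot_scall, !vdot_scalr. rewrite <- vnorm_sq.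
  set (a := vnorm (vsub (x (S t)) (x t))) in *.
  replace (0 + / gamma * (/ gamma * (-1 * (-1 * a ^ 2))) + / (2 * gamma) * (/ (2 * gamma) * a ^ 2))
    with (5 / 4 * (a / gamma) ^ 2) by (field; lra).
  assert (a / gamma <= MM * dd (S t) / gamma) by (unfold Rdiv; nra).
  assert (0 <= a / gamma) by (unfold Rdiv; nra).
  replace ((2 / gamma * MM * dd (S t)) ^ 2) with (4 * (MM * dd (S t) / gamma) ^ 2) by (field; lra).
  nra.
Qed.



Variables ys zs xs : vec n.
Hypothesis Hcl : ecluster (@tdot n) (@tsub n) (fun t => (y t, z t, x t)) (ys, zs, xs).
Hypothesis HKL : KL_function (@tdot n) (@tsub n) (Pgamma f g gamma).
Hypothesis Hc0 : gamma * L ^ 2 < sigma.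

Definition cc : R := (sigma - gamma * L ^ 2) / 2.
Lemma cc_pos : 0 < cc.
Proof. unfold cc; lra. Qed.

Definition W (t : nat) : triple n := (y t, z t, x t).
Definition ws : triple n := (ys, zs, xs).

Lemma subseq : exists s : nat -> nat, (forall j, (S j <= s j)%nat) /\
   Un_cv (fun j => enorm (@tdot n) (tsub (W (s j)) ws)) 0.
Proof.
  assert (H : forall j, exists k, (S j <= k)%nat /\ enorm (@tdot n) (tsub (W k) ws) < / INR (S j)).
  { intro j. apply Hcl. apply Rinv_0_lt_compat. apply lt_0_INR. lia. }
  exists (fun j => proj1_sig (constructive_indefinite_description _ (H j))). split.
  - intro j. exact (proj1 (proj2_sig (constructive_indefinite_description _ (H j)))).
  - apply cv_squeeze with (e := fun j => / INR (S j)).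
    + intro j. pose proof (proj2 (proj2_sig (constructive_indefinite_description _ (H j)))) as Hk.
      split. apply sqrt_pos. lra.
    + intros eps He. destruct (archimed_cor1 eps He) as [N [HN HN0]]. exists N. intros j Hj.
      unfold Rdist. rewrite Rminus_0_r. rewrite Rabs_right.
      eapply Rle_lt_trans; [|apply HN]. apply Rinv_le_contravar. apply lt_0_INR; lia. apply le_INR; lia.
      apply Rle_ge. left. apply Rinv_0_lt_compat. apply lt_0_INR; lia. Qed.

Lemma Pdecr p k : PP (S (k + p)) <= PP (S p).
Proof. induction k; simpl; [lra|]. pose proof (descent (k + p)). pose proof cc_pos. unfold cc in H0.
  assert (0 <= (sigma - gamma * L ^ 2) / 2 * dd (S (k + p)) ^ 2) by (apply Rmult_le_pos; nra). lra. Qed.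

Lemma Pdecr' p q : (1 <= p <= q)%nat -> PP q <= PP p.
Proof. intros H. destruct p; [lia|]. replace q with (S ((q - S p) + p)) by lia. apply Pdecr. Qed.

Lemma Pstar_exists : exists Ps, Pgamma f g gamma ws = Some Ps /\ forall m, (1 <= m)%nat -> Ps <= PP m.
Proof.
  destruct subseq as [s [Hs1 Hs2]].
  destruct HKL as [_ [Hlsc _]].
  assert (K : forall m, (1 <= m)%nat -> exists r, Pgamma f g gamma ws = Some r /\ r <= PP m).
  { intros m Hm. apply (Hlsc (PP m) (fun j => W (s (j + m)%nat)) ws).
    - intro j. exists (PP (s (j + m)%nat)). split.
      + specialize (Hs1 (j + m)%nat). replace (s (j + m)%nat) with (S (pred (s (j + m)%nat))) by lia. apply P_some.
      + apply Pdecr'. specialize (Hs1 (j + m)%nat). lia.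
    - unfold ecv. apply (cv_tail _ 0 m Hs2). }
  destruct (K 1%nat (le_n 1)) as [Ps [HPs _]]. exists Ps. split; auto.
  intros m Hm. destruct (K m Hm) as [r [Hr Hr2]]. rewrite HPs in Hr. injection Hr. intros ->. auto. Qed.


Definition cvec (k : nat) : vec n := vsub (vscal 2 (z k)) (x k).
Definition Bfun (k : nat) : R :=
  f (y k) + (- (3 / (2 * gamma))) * vdot (vsub (y k) (z k)) (vsub (y k) (z k))
  + / gamma * vdot (vsub (x k) (y k)) (vsub (z k) (y k))
  + / (2 * gamma) * (vdot (vsub zs (cvec k)) (vsub zs (cvec k)) - vdot (vsub (z k) (cvec k)) (vsub (z k) (cvec k))).
Definition Bstar : R :=
  f ys + (- (3 / (2 * gamma))) * vdot (vsub ys zs) (vsub ys zs)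
  + / gamma * vdot (vsub xs ys) (vsub zs ys)
  + / (2 * gamma) * (vdot (vsub zs (vsub (vscal 2 zs) xs)) (vsub zs (vsub (vscal 2 zs) xs))
                      - vdot (vsub zs (vsub (vscal 2 zs) xs)) (vsub zs (vsub (vscal 2 zs) xs))).

Lemma P_bound Ps t : Pgamma f g gamma ws = Some Ps -> PP (S t) <= Ps + Bfun (S t) - Bstar.
Proof.
  intros HP. unfold ws, Pgamma in HP. destruct (g zs) as [gzs|] eqn:Egz; [|discriminate].
  injection HP; intros <-.
  destruct (Hit t) as [_ [[gz [Hgz Hz]] HX]].
  specialize (Hz zs gzs Egz).
  assert (Hcv : vsub (vscal 2 (y (S t))) (x t) = cvec (S t)).
  { unfold cvec. rewrite HX. apply functional_extensionality; intro i; unfold vadd, vscal, vsub; ring. }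
  rewrite Hcv, !vnorm_sq in Hz.
  unfold PP, gval, Bfun, Bstar. rewrite Hgz. rewrite !vnorm_sq.
  replace (vnorm (vsub ys zs) * (vnorm (vsub ys zs) * 1)) with (vdot (vsub ys zs) (vsub ys zs)) by (rewrite <- vnorm_sq; ring).
  lra.
Qed.

Lemma cv_opp (u : nat -> R) l : Un_cv u l -> Un_cv (fun i => - u i) (- l).
Proof. intros H eps He. destruct (H eps He) as [N HN]. exists N. intros j Hj. unfold Rdist in *.
  replace (- u j - - l) with (- (u j - l)) by ring. rewrite Rabs_Ropp. auto. Qed.

Lemma Plimsup Ps : Pgamma f g gamma ws = Some Ps -> forall eps, eps > 0 -> exists m, (1 <= m)%nat /\ PP m <= Ps + eps.
Proof.
  intros HP eps He. destruct subseq as [s [Hs1 Hs2]].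
  assert (Hy : vconv (fun j => y (s j)) ys).
  { apply cv_squeeze with (e := fun j => enorm (@tdot n) (tsub (W (s j)) ws)); auto.
    intro j. split; [apply vnorm_nonneg|]. apply (vnorm_le_enorm n _ (z (s j)) (x (s j)) _ zs xs). }
  assert (Hz : vconv (fun j => z (s j)) zs).
  { apply cv_squeeze with (e := fun j => enorm (@tdot n) (tsub (W (s j)) ws)); auto.
    intro j. split; [apply vnorm_nonneg|]. apply (vnorm_le_enorm n (y (s j)) _ (x (s j)) ys _ xs). }
  assert (Hx : vconv (fun j => x (s j)) xs).
  { apply cv_squeeze with (e := fun j => enorm (@tdot n) (tsub (W (s j)) ws)); auto.
    intro j. split; [apply vnorm_nonneg|]. apply (vnorm_le_enorm n (y (s j)) (z (s j)) _ ys zs _). }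
  assert (HB : Un_cv (fun j => Bfun (s j)) Bstar).
  { unfold Bfun, Bstar, cvec.
    repeat first [ apply CV_minus | apply CV_plus | apply cv_opp | apply CV_mult | apply cv_const | apply (f_conv n f df _ _ Hg)
                 | apply vdot_conv | apply vconv_sub | apply vconv_scal | apply vconv_const | assumption ]. }
  destruct (HB eps He) as [N HN]. specialize (HN N (le_n N)). unfold Rdist in HN.
  exists (s N). split. specialize (Hs1 N); lia.
  replace (s N) with (S (pred (s N))) by (specialize (Hs1 N); lia).
  pose proof (P_bound Ps (pred (s N)) HP).
  replace (S (pred (s N))) with (s N) in * by (specialize (Hs1 N); lia).
  pose proof (Rle_abs (Bfun (s N) - Bstar)). lra.
Qed.


Lemma P_conv Ps : Pgamma f g gamma ws = Some Ps -> (forall m, (1 <= m)%nat -> Ps <= PP m) ->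
  forall eps, eps > 0 -> exists N, (1 <= N)%nat /\ forall t, (N <= t)%nat -> Ps <= PP t <= Ps + eps.
Proof. intros HP Hge eps He. destruct (Plimsup Ps HP eps He) as [m [Hm1 Hm2]]. exists m. split; auto.
  intros t Ht. split. apply Hge; lia. pose proof (Pdecr' m t ltac:(lia)). lra. Qed.

Lemma dd_small Ps : Pgamma f g gamma ws = Some Ps -> (forall m, (1 <= m)%nat -> Ps <= PP m) ->
  forall eps, eps > 0 -> exists N, (1 <= N)%nat /\ forall t, (N <= t)%nat -> dd t < eps.
Proof. intros HP Hge eps He. pose proof cc_pos.
  destruct (P_conv Ps HP Hge (cc * eps ^ 2 / 2)) as [N [HN1 HN]]. { apply Rdiv_lt_0_compat; [|lra]. apply Rmult_lt_0_compat; [lra| nra]. }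
  exists N. split; auto. intros t Ht. destruct t as [|t']; [lia|].
  pose proof (descent t'). pose proof (HN (S t') Ht). pose proof (Hge (S (S t')) ltac:(lia)).
  pose proof (dd_nonneg (S t')). fold cc in H0.
  assert (cc * dd (S t') ^ 2 <= cc * (eps ^ 2 / 2)) by lra.
  apply Rmult_le_reg_l in H4; auto.
  assert (dd (S t') ^ 2 < eps ^ 2) by nra. nra. Qed.

Definition zero3 : triple n := ((fun _ => 0), (fun _ => 0), (fun _ => 0)).

Lemma vsub_zero (a : vec n) : vsub a (fun _ => 0) = a.
Proof. apply functional_extensionality; intro i; unfold vsub; ring. Qed.

Lemma lim_subgrad_ws Ps : Pgamma f g gamma ws = Some Ps -> (forall m, (1 <= m)%nat -> Ps <= PP m) ->
  limiting_subgrad (@tdot n) (@tsub n) (Pgamma f g gamma) ws zero3.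
Proof.
  intros HP Hge. destruct subseq as [s [Hs1 Hs2]].
  exists Ps. split; auto.
  exists (fun j => W (s j)), (fun j => vvec (pred (s j))), (fun j => PP (s j)).
  split; [|split; [|split]].
  - intro j. assert (E : s j = S (pred (s j))) by (specialize (Hs1 j); lia).
    unfold W. rewrite E. split; [apply P_some| apply frechet].
  - exact Hs2.
  - intros eps He. destruct (P_conv Ps HP Hge (eps/2)) as [N [HN1 HN]]; [lra|].
    exists N. intros j Hj. unfold Rdist. specialize (HN (s j) ltac:(specialize (Hs1 j); lia)).
    rewrite Rabs_right; lra.
  - unfold ecv. apply cv_squeeze with (e := fun j => 2 / gamma * MM * dd (S (pred (s j)))).
    + intro j. unfold zero3, tsub. destruct (vvec (pred (s j))) as [[a b] c] eqn:Ev. rewrite !vsub_zero.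
      split. apply sqrt_pos. rewrite <- Ev. apply vvec_bound.
    + assert (0 < 2 / gamma * MM) by (unfold MM; apply Rmult_lt_0_compat; [apply Rdiv_lt_0_compat|]; nra).
      intros eps He. destruct (dd_small Ps HP Hge (eps / (2 / gamma * MM))) as [N [_ HN]].
      { apply Rdiv_lt_0_compat; lra. }
      exists N. intros j Hj. unfold Rdist. rewrite Rminus_0_r.
      specialize (HN (S (pred (s j))) ltac:(specialize (Hs1 j); lia)).
      pose proof (dd_nonneg (S (pred (s j)))).
      rewrite Rabs_right by (apply Rle_ge, Rmult_le_pos; lra).
      apply Rmult_lt_compat_l with (r := 2 / gamma * MM) in HN; auto.
      replace (2 / gamma * MM * (eps / (2 / gamma * MM))) with eps in HN.
      lra. assert (0 < MM) by (unfold MM; nra). field. split; lra.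
Qed.


Lemma lt_eta_mono a b eta : b <= a -> lt_eta a eta -> lt_eta b eta.
Proof. destruct eta; simpl; auto. lra. Qed.

Lemma concave_deriv (phi dphi : R -> R) (eta : option R) a b :
  (forall a b t, 0 <= a -> lt_eta a eta -> 0 <= b -> lt_eta b eta -> 0 <= t <= 1 ->
       t * phi a + (1 - t) * phi b <= phi (t * a + (1 - t) * b)) ->
  derivable_pt_lim phi a (dphi a) -> 0 <= b <= a -> 0 < a -> lt_eta a eta ->
  dphi a * (a - b) <= phi a - phi b.
Proof.
  intros Hcv Hd Hb Ha Hea.
  destruct (Req_dec b a) as [E|E]. { subst. lra. }
  assert (Hab : 0 < a - b) by lra.
  cut (dphi a * (a - b) - (phi a - phi b) <= 0); [lra|].
  apply le_eps. intros e He.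
  destruct (Hd (e / (a - b))) as [del Hdel]. { apply Rdiv_lt_0_compat; lra. }
  set (t := Rmin 1 (del / (2 * (a - b)))).
  assert (Ht0 : 0 < t). { unfold t. apply Rmin_pos; [lra|]. apply Rdiv_lt_0_compat; [apply cond_pos|lra]. }
  assert (Ht1 : t <= 1) by apply Rmin_l.
  assert (Ht2 : t * (a - b) <= del / 2).
  { assert (t <= del / (2 * (a - b))) by apply Rmin_r.
    apply Rmult_le_compat_r with (r := a - b) in H; [|lra].
    replace (del / (2 * (a - b)) * (a - b)) with (del / 2) in H by (field; lra). lra. }
  pose proof (cond_pos del) as Hdp.
  set (h := - (t * (a - b))).
  assert (Hh0 : h <> 0) by (unfold h; nra).
  assert (Hh1 : Rabs h < del) by (unfold h; rewrite Rabs_Ropp, Rabs_right by nra; lra).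
  specialize (Hdel h Hh0 Hh1).
  specialize (Hcv b a t (proj1 Hb) (lt_eta_mono a b eta (proj2 Hb) Hea) (Rlt_le _ _ Ha) Hea (conj (Rlt_le _ _ Ht0) Ht1)).
  replace (t * b + (1 - t) * a) with (a + h) in Hcv by (unfold h; ring).
  set (D := (phi (a + h) - phi a) / h) in *.
  assert (HD : D * h = phi (a + h) - phi a) by (unfold D; field; auto).
  assert (HD2 : D * (a - b) <= phi a - phi b).
  { assert (t * (D * (a - b)) <= t * (phi a - phi b)).
    { replace (t * (D * (a - b))) with (- (D * h)) by (unfold h; ring). rewrite HD. lra. }
    apply Rmult_le_reg_l in H; auto. }
  apply Rabs_def2 in Hdel. destruct Hdel as [Hd1 Hd2].
  assert (dphi a < D + e / (a - b)) by lra.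
  apply Rmult_lt_compat_r with (r := a - b) in H; auto.
  replace ((D + e / (a - b)) * (a - b)) with (D * (a - b) + e) in H by (field; lra). lra.
Qed.

Lemma enorm_self (w : triple n) : enorm (@tdot n) (tsub w w) = 0.
Proof. destruct w as [[a b] c]. unfold enorm, tdot, tsub. cbv beta iota.
  assert (forall v : vec n, vsub v v = (fun _ => 0)) by (intro v; apply functional_extensionality; intro i; unfold vsub; ring).
  rewrite !H, !vdot_zero_l. replace (0 + 0 + 0) with 0 by ring. apply sqrt_0. Qed.

Lemma frechet_lim (h : triple n -> option R) w v hw : h w = Some hw ->
  frechet_subgrad (@tdot n) (@tsub n) h w v -> limiting_subgrad (@tdot n) (@tsub n) h w v.
Proof. intros Hw Hf. exists hw. split; auto. exists (fun _ => w), (fun _ => v), (fun _ => hw).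
  split; [|split; [|split]].
  - intro k. split; auto.
  - unfold ecv. rewrite enorm_self. apply cv_const.
  - apply cv_const.
  - unfold ecv. rewrite enorm_self. apply cv_const. Qed.

Definition bb : R := 2 / gamma * MM.
Lemma bb_pos : 0 < bb.
Proof. unfold bb, MM. apply Rmult_lt_0_compat; [apply Rdiv_lt_0_compat|]; nra. Qed.

Lemma key_step Ps (eta : option R) delta (phi dphi : R -> R) t :
  Pgamma f g gamma ws = Some Ps -> (forall m, (1 <= m)%nat -> Ps <= PP m) ->
  (forall a b t, 0 <= a -> lt_eta a eta -> 0 <= b -> lt_eta b eta -> 0 <= t <= 1 ->
       t * phi a + (1 - t) * phi b <= phi (t * a + (1 - t) * b)) ->
  (forall s, 0 < s -> lt_eta s eta -> derivable_pt_lim phi s (dphi s) /\ continuity_pt dphi s /\ 0 < dphi s) ->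
  (forall w hw, enorm (@tdot n) (tsub w ws) < delta -> Pgamma f g gamma w = Some hw ->
       Ps < hw -> lt_eta (hw - Ps) eta ->
       forall v, limiting_subgrad (@tdot n) (@tsub n) (Pgamma f g gamma) w v -> dphi (hw - Ps) * enorm (@tdot n) v >= 1) ->
  enorm (@tdot n) (tsub (W (S t)) ws) < delta -> lt_eta (PP (S t) - Ps) eta ->
  cc / bb * dd (S t) <= phi (PP (S t) - Ps) - phi (PP (S (S t)) - Ps).
Proof.
  intros HP Hge Hcv Hder HKLi Hball Heta.
  pose proof (descent t) as Hdes. fold cc in Hdes. pose proof cc_pos. pose proof bb_pos.
  pose proof (Hge (S (S t)) ltac:(lia)) as Hge2. pose proof (dd_nonneg (S t)) as Hdn.
  destruct (Req_dec (PP (S t)) Ps) as [E|E].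
  - assert (cc * dd (S t) ^ 2 <= 0) by lra.
    assert (0 <= cc * dd (S t) ^ 2) by (apply Rmult_le_pos; [lra|apply pow2_ge_0]).
    assert (dd (S t) ^ 2 = 0).
    { apply Rmult_eq_reg_l with cc; lra. }
    assert (dd (S t) = 0) by (apply (pow_eq_zero_depr (dd (S t)) 2) || nra; auto).
    assert (PP (S (S t)) = Ps) by lra.
    rewrite E, H5, H4. replace (Ps - Ps) with 0 by ring. rewrite Rmult_0_r. lra.
  - assert (Hlt : Ps < PP (S t)) by (pose proof (Hge (S t) ltac:(lia)); lra).
    assert (0 <= cc * dd (S t) ^ 2) by (apply Rmult_le_pos; [lra|apply pow2_ge_0]).
    set (a := PP (S t) - Ps). set (b := PP (S (S t)) - Ps).
    destruct (Hder a ltac:(unfold a; lra) Heta) as [Hd [_ Hdp]].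
    pose proof (concave_deriv phi dphi eta a b Hcv Hd ltac:(unfold a, b; lra) ltac:(unfold a; lra) Heta) as Hc1.
    pose proof (HKLi (W (S t)) (PP (S t)) Hball (P_some t) Hlt Heta (vvec t)
                  (frechet_lim _ _ _ _ (P_some t) (frechet t))) as HK.
    fold a in HK. pose proof (vvec_bound t) as Hvb. fold bb in Hvb.
    assert (Hk1 : dphi a * (bb * dd (S t)) >= 1).
    { pose proof (sqrt_pos (tdot (vvec t) (vvec t))). unfold enorm in *. nra. }
    assert (Hk2 : dphi a * (a - b) >= dphi a * (cc * dd (S t) ^ 2)).
    { apply Rmult_ge_compat_l; [lra|]. unfold a, b. lra. }
    assert (cc / bb * dd (S t) <= dphi a * (cc * dd (S t) ^ 2)).
    { replace (dphi a * (cc * dd (S t) ^ 2)) with (cc / bb * dd (S t) * (dphi a * (bb * dd (S t)))) by (field; lra).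
      assert (0 <= cc / bb * dd (S t)) by (apply Rmult_le_pos; [apply Rlt_le, Rdiv_lt_0_compat|]; lra).
      nra. }
    lra.
Qed.


Definition K0 : R := 1 + MM.
Lemma MM_pos : 0 < MM. Proof. unfold MM; nra. Qed.

Section Claim.
Variable N : nat.
Hypothesis HN1 : (1 <= N)%nat.
Definition Sd (m : nat) : R := psum (fun i => dd (N + i)) m.
Definition uu (i : nat) : R := K0 * (Sd (S i) + Sd i).

Lemma uu_step i : uu (S i) - uu i = K0 * (dd (N + i) + dd (N + S i)).
Proof. unfold uu, Sd. simpl. ring. Qed.

Lemma mv_y i : vnorm (vsub (y (N + S i)) (y (N + i))) <= uu (S i) - uu i.
Proof. rewrite uu_step. rewrite Nat.add_succ_r. change (vnorm (vsub (y (S (N + i))) (y (N + i)))) with (dd (N + i)). pose proof MM_pos.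
  pose proof (dd_nonneg (N + i)). pose proof (dd_nonneg (S (N + i))). unfold K0. nra. Qed.

Lemma mv_x i : vnorm (vsub (x (N + S i)) (x (N + i))) <= uu (S i) - uu i.
Proof. rewrite uu_step. rewrite Nat.add_succ_r. pose proof (dx_bound (N + i)). pose proof MM_pos.
  pose proof (dd_nonneg (N + i)). pose proof (dd_nonneg (S (N + i))). unfold K0. nra. Qed.

Lemma mv_z i : vnorm (vsub (z (N + S i)) (z (N + i))) <= uu (S i) - uu i.
Proof. rewrite uu_step. rewrite Nat.add_succ_r. replace (N + i)%nat with (S (pred (N + i))) by lia.
  pose proof (dz_bound (pred (N + i))). pose proof MM_pos.
  pose proof (dd_nonneg (S (pred (N + i)))). pose proof (dd_nonneg (S (S (pred (N + i))))). unfold K0. nra. Qed.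

Lemma Sd_nonneg m : 0 <= Sd m.
Proof. induction m; unfold Sd in *; simpl; [lra|]. pose proof (dd_nonneg (N + m)). lra. Qed.

Lemma comp_bound m :
  vnorm (vsub (y (N + m)) ys) <= vnorm (vsub (y N) ys) + 2 * K0 * Sd (S m) /\
  vnorm (vsub (z (N + m)) zs) <= vnorm (vsub (z N) zs) + 2 * K0 * Sd (S m) /\
  vnorm (vsub (x (N + m)) xs) <= vnorm (vsub (x N) xs) + 2 * K0 * Sd (S m).
Proof.
  assert (Hu : uu m - uu 0 <= 2 * K0 * Sd (S m)).
  { unfold uu. assert (Sd m <= Sd (S m)) by (unfold Sd; simpl; pose proof (dd_nonneg (N + m)); lra).
    assert (Sd 1 = dd (N + 0)) by (unfold Sd; simpl; ring). assert (Sd 0 = 0) by reflexivity.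
    rewrite H0, H1. pose proof (dd_nonneg (N + 0)). pose proof (Sd_nonneg m). pose proof MM_pos. unfold K0. nra. }
  pose proof (tele_fwd n (fun i => y (N + i)%nat) uu ys mv_y m).
  pose proof (tele_fwd n (fun i => z (N + i)%nat) uu zs mv_z m).
  pose proof (tele_fwd n (fun i => x (N + i)%nat) uu xs mv_x m).
  simpl in *. rewrite Nat.add_0_r in *. lra.
Qed.


Lemma claim Ps (eta : option R) delta (phi dphi : R -> R) :
  Pgamma f g gamma ws = Some Ps -> (forall m, (1 <= m)%nat -> Ps <= PP m) ->
  (forall a b t, 0 <= a -> lt_eta a eta -> 0 <= b -> lt_eta b eta -> 0 <= t <= 1 ->
       t * phi a + (1 - t) * phi b <= phi (t * a + (1 - t) * b)) ->
  (forall s, 0 < s -> lt_eta s eta -> derivable_pt_lim phi s (dphi s) /\ continuity_pt dphi s /\ 0 < dphi s) ->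
  (forall w hw, enorm (@tdot n) (tsub w ws) < delta -> Pgamma f g gamma w = Some hw ->
       Ps < hw -> lt_eta (hw - Ps) eta ->
       forall v, limiting_subgrad (@tdot n) (@tsub n) (Pgamma f g gamma) w v -> dphi (hw - Ps) * enorm (@tdot n) v >= 1) ->
  (forall t, (N <= t)%nat -> lt_eta (PP t - Ps) eta /\ 0 <= phi (PP t - Ps)) ->
  vnorm (vsub (y N) ys) < delta / 9 -> vnorm (vsub (z N) zs) < delta / 9 -> vnorm (vsub (x N) xs) < delta / 9 ->
  2 * K0 * (phi (PP N - Ps) / (cc / bb)) < delta / 9 ->
  (forall t, (N <= t)%nat -> 2 * K0 * dd t < delta / 9) ->
  forall m, enorm (@tdot n) (tsub (W (N + m)) ws) < delta /\ Sd m <= (phi (PP N - Ps) - phi (PP (N + m) - Ps)) / (cc / bb).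
Proof.
  intros HP Hge Hcv Hder HKLi Hdom Hy0 Hz0 Hx0 Hphi Hdd.
  pose proof cc_pos. pose proof bb_pos. assert (Hk : 0 < cc / bb) by (apply Rdiv_lt_0_compat; lra).
  pose proof MM_pos. assert (HK0 : 0 < K0) by (unfold K0; lra).
  assert (Hball : forall m, Sd (S m) <= phi (PP N - Ps) / (cc / bb) + dd (N + m) ->
            enorm (@tdot n) (tsub (W (N + m)) ws) < delta).
  { intros m Hm. destruct (comp_bound m) as [B1 [B2 B3]].
    pose proof (enorm_le_sum n (y (N + m)) (z (N + m)) (x (N + m)) ys zs xs) as E.
    unfold W, ws. pose proof (Hdd (N + m)%nat ltac:(lia)).
    assert (2 * K0 * Sd (S m) <= 2 * K0 * (phi (PP N - Ps) / (cc / bb)) + 2 * K0 * dd (N + m)).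
    { replace (2 * K0 * (phi (PP N - Ps) / (cc / bb)) + 2 * K0 * dd (N + m)) with
        (2 * K0 * (phi (PP N - Ps) / (cc / bb) + dd (N + m))) by ring.
      apply Rmult_le_compat_l; lra. }
    lra. }
  induction m as [|m [IHb IHs]].
  - split.
    + apply Hball. unfold Sd; simpl. rewrite Nat.add_0_r.
      destruct (Hdom N (le_n N)) as [_ Hp]. pose proof (Rdiv_le_0_compat _ _ Hp Hk). 
      unfold Rdiv in *. lra.
    + unfold Sd; simpl. rewrite Nat.add_0_r. replace (phi (PP N - Ps) - phi (PP N - Ps)) with 0 by ring.
      unfold Rdiv; lra.
  - assert (E1 : (N + m)%nat = S (pred (N + m))) by lia.
    assert (KS : cc / bb * dd (N + m) <= phi (PP (N + m) - Ps) - phi (PP (N + S m) - Ps)).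
    { rewrite E1. rewrite Nat.add_succ_r, E1.
      apply (key_step Ps eta delta phi dphi (pred (N + m)) HP Hge Hcv Hder HKLi).
      - rewrite <- E1. exact IHb.
      - rewrite <- E1. apply Hdom. lia. }
    assert (HS : Sd (S m) <= (phi (PP N - Ps) - phi (PP (N + S m) - Ps)) / (cc / bb)).
    { unfold Sd in *; simpl. 
      assert (dd (N + m) <= (phi (PP (N + m) - Ps) - phi (PP (N + S m) - Ps)) / (cc / bb)).
      { apply Rmult_le_reg_l with (cc / bb); auto.
        replace (cc / bb * ((phi (PP (N + m) - Ps) - phi (PP (N + S m) - Ps)) / (cc / bb)))
          with (phi (PP (N + m) - Ps) - phi (PP (N + S m) - Ps)) by (field; lra). lra. }
      replace ((phi (PP N - Ps) - phi (PP (N + S m) - Ps)) / (cc / bb)) with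
        ((phi (PP N - Ps) - phi (PP (N + m) - Ps)) / (cc / bb) + (phi (PP (N + m) - Ps) - phi (PP (N + S m) - Ps)) / (cc / bb))
        by (field; lra).
      lra. }
    split; auto.
    apply Hball. change (Sd (S (S m))) with (Sd (S m) + dd (N + S m)).
    destruct (Hdom (N + S m)%nat ltac:(lia)) as [_ Hp].
    assert (phi (PP (N + S m) - Ps) / (cc / bb) >= 0).
    { apply Rle_ge. apply Rdiv_le_0_compat; auto. }
    assert ((phi (PP N - Ps) - phi (PP (N + S m) - Ps)) / (cc / bb) =
            phi (PP N - Ps) / (cc / bb) - phi (PP (N + S m) - Ps) / (cc / bb)) by (field; lra).
    lra.
Qed.

Lemma conv_from_bound B : (forall m, Sd m <= B) ->
  Un_cv (fun i => enorm (@tdot n) (tsub (W (N + i)) ws)) 0.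
Proof.
  intros HB.
  assert (Hg1 : Un_growing Sd) by (intro m; unfold Sd; simpl; pose proof (dd_nonneg (N + m)); lra).
  assert (Hub : has_ub Sd) by (exists B; intros r [i ->]; apply HB).
  destruct (growing_cv Sd Hg1 Hub) as [Sinf HSinf].
  pose proof MM_pos. assert (HK0 : 0 < K0) by (unfold K0; lra).
  assert (Hucv : Un_cv uu (K0 * (Sinf + Sinf))).
  { unfold uu. apply CV_mult. apply cv_const. apply CV_plus; auto.
    intros eps He. destruct (HSinf eps He) as [M HM]. exists M. intros j Hj. apply HM. lia. }
  assert (Hug : Un_growing uu).
  { intro m. unfold uu. pose proof (Hg1 m). pose proof (Hg1 (S m)). nra. }
  set (U := K0 * (Sinf + Sinf)) in *.
  pose proof (growing_ineq uu U Hug Hucv) as HuU.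
  assert (Hcomp : forall i, enorm (@tdot n) (tsub (W (N + i)) ws) <= 3 * (U - uu i)).
  { intro i.
    assert (Hcm : forall (a : nat -> vec n) l, (forall j, vnorm (vsub (a (N + S j)%nat) (a (N + j)%nat)) <= uu (S j) - uu j) ->
              (forall eps, eps > 0 -> exists k, (N + i <= k)%nat /\ vnorm (vsub (a k) l) < eps) ->
              vnorm (vsub (a (N + i)%nat) l) <= U - uu i).
    { intros a l Hmv Hcl'. cut (vnorm (vsub (a (N + i)%nat) l) - (U - uu i) <= 0); [lra|].
      apply le_eps. intros e He. destruct (Hcl' e He) as [k [Hk1 Hk2]].
      pose proof (tele_bwd n (fun j => a (N + j)%nat) uu l Hmv i (k - N - i)) as T. simpl in T.
      replace (N + (k - N - i + i))%nat with k in T by lia.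
      pose proof (HuU (k - N - i + i)%nat). lra. }
    assert (Hcl2 : forall eps, eps > 0 -> exists k, (N + i <= k)%nat /\ enorm (@tdot n) (tsub (W k) ws) < eps).
    { intros eps He. destruct (Hcl eps He (N + i)%nat) as [k [Hk1 Hk2]]. exists k. split; auto. }
    pose proof (Hcm y ys mv_y) as C1. pose proof (Hcm z zs mv_z) as C2. pose proof (Hcm x xs mv_x) as C3.
    assert (C1' : vnorm (vsub (y (N + i)%nat) ys) <= U - uu i).
    { apply C1. intros eps He. destruct (Hcl2 eps He) as [k [Hk1 Hk2]]. exists k. split; auto.
      pose proof (vnorm_le_enorm n (y k) (z k) (x k) ys zs xs). unfold W, ws in Hk2. lra. }
    assert (C2' : vnorm (vsub (z (N + i)%nat) zs) <= U - uu i).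
    { apply C2. intros eps He. destruct (Hcl2 eps He) as [k [Hk1 Hk2]]. exists k. split; auto.
      pose proof (vnorm_le_enorm n (y k) (z k) (x k) ys zs xs). unfold W, ws in Hk2. lra. }
    assert (C3' : vnorm (vsub (x (N + i)%nat) xs) <= U - uu i).
    { apply C3. intros eps He. destruct (Hcl2 eps He) as [k [Hk1 Hk2]]. exists k. split; auto.
      pose proof (vnorm_le_enorm n (y k) (z k) (x k) ys zs xs). unfold W, ws in Hk2. lra. }
    pose proof (enorm_le_sum n (y (N + i)%nat) (z (N + i)%nat) (x (N + i)%nat) ys zs xs). unfold W, ws. lra. }
  apply cv_squeeze with (e := fun i => 3 * (U - uu i)).
  - intro i. split; [apply sqrt_pos|apply Hcomp].
  - replace 0 with (3 * - (0)) by ring. apply CV_mult; [apply cv_const|].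
    intros eps He. destruct (Hucv eps He) as [M HM]. exists M. intros j Hj. specialize (HM j Hj).
    unfold Rdist in *. replace (U - uu j - - 0) with (- (uu j - U)) by ring. rewrite Rabs_Ropp. auto.
Qed.

End Claim.


Lemma eta_rho (eta : option R) d0 : lt_eta 0 eta -> 0 < d0 ->
  exists rho, 0 < rho /\ rho <= d0 /\ forall s, s < rho -> lt_eta s eta.
Proof. intros He Hd. destruct eta as [e|]; simpl in *.
  - exists (Rmin d0 e). split; [apply Rmin_pos; lra|]. split; [apply Rmin_l|].
    intros s Hs0. pose proof (Rmin_r d0 e). lra.
  - exists d0. repeat split; auto; lra. Qed.

Theorem main_conv : exists l, ecv (@tdot n) (@tsub n) (fun t => (y t, z t, x t)) l.
Proof.
  destruct Pstar_exists as [Ps [HP Hge]].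
  pose proof (lim_subgrad_ws Ps HP Hge) as Hls.
  destruct HKL as [_ [_ HKat]].
  destruct (HKat ws (ex_intro _ zero3 Hls)) as [hb [Hhb [eta [delta [phi [dphi
     [Heta0 [Hdel [Hphi0 [Hphinn [Hphic [Hconc [Hder HKLi]]]]]]]]]]]]].
  rewrite HP in Hhb. injection Hhb as <-.
  pose proof cc_pos. pose proof bb_pos. pose proof MM_pos.
  assert (HK0 : 0 < K0) by (unfold K0; lra).
  assert (Hk : 0 < cc / bb) by (apply Rdiv_lt_0_compat; lra).
  set (ephi := cc / bb * delta / (18 * K0)).
  assert (Hephi : 0 < ephi) by (unfold ephi; apply Rdiv_lt_0_compat; [apply Rmult_lt_0_compat|]; lra).
  destruct (Hphic 0 (Rle_refl 0) Heta0 ephi Hephi) as [d0 [Hd0 Hcont]].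
  destruct (eta_rho eta d0 Heta0 Hd0) as [rho [Hrho [Hrhod Hrhoe]]].
  destruct (P_conv Ps HP Hge (rho / 2) ltac:(lra)) as [N1 [HN1a HN1]].
  destruct (dd_small Ps HP Hge (delta / (18 * K0))) as [N2 [_ HN2]].
  { apply Rdiv_lt_0_compat; lra. }
  destruct (Hcl (delta / 9) ltac:(lra) (max N1 N2)) as [N [HNge HNb]].
  assert (HN1' : (1 <= N)%nat) by lia.
  assert (Hdom : forall t, (N <= t)%nat -> lt_eta (PP t - Ps) eta /\ 0 <= phi (PP t - Ps)).
  { intros t Ht. pose proof (HN1 t ltac:(lia)). split.
    - apply Hrhoe. lra.
    - apply Hphinn. lra. apply Hrhoe. lra. }
  destruct (vnorm_le_enorm n (y N) (z N) (x N) ys zs xs) as [Iy [Iz Ix]].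
  assert (HNb' : enorm (@tdot n) (tsub (y N, z N, x N) (ys, zs, xs)) < delta / 9) by exact HNb.
  assert (Hphi : 2 * K0 * (phi (PP N - Ps) / (cc / bb)) < delta / 9).
  { pose proof (HN1 N ltac:(lia)).
    specialize (Hcont (PP N - Ps) ltac:(lra) (proj1 (Hdom N (le_n N)))).
    rewrite Rminus_0_r, Hphi0, Rminus_0_r in Hcont.
    specialize (Hcont ltac:(rewrite Rabs_right; lra)).
    apply Rabs_def2 in Hcont. destruct Hcont as [Hc1 _].
    apply Rmult_lt_reg_r with (cc / bb / (2 * K0)). apply Rdiv_lt_0_compat; lra.
    replace (2 * K0 * (phi (PP N - Ps) / (cc / bb)) * (cc / bb / (2 * K0))) with (phi (PP N - Ps)) by (field; lra).
    unfold ephi in Hc1. replace (delta / 9 * (cc / bb / (2 * K0))) with (cc / bb * delta / (18 * K0)) by (field; lra).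
    lra. }
  assert (Hdd : forall t, (N <= t)%nat -> 2 * K0 * dd t < delta / 9).
  { intros t Ht. pose proof (HN2 t ltac:(lia)).
    apply Rmult_lt_compat_l with (r := 2 * K0) in H2; [|lra].
    replace (2 * K0 * (delta / (18 * K0))) with (delta / 9) in H2 by (field; lra). lra. }
  pose proof (claim N HN1' Ps eta delta phi dphi HP Hge Hconc Hder HKLi Hdom ltac:(lra) ltac:(lra) ltac:(lra) Hphi Hdd) as Cl.
  pose proof (conv_from_bound N HN1' (phi (PP N - Ps) / (cc / bb))) as Cv.
  exists ws. unfold ecv.
  assert (Cv' : Un_cv (fun i => enorm (@tdot n) (tsub (W (N + i)) ws)) 0).
  { apply Cv. intro m. destruct (Cl m) as [_ Hm].
    destruct (Hdom (N + m)%nat ltac:(lia)) as [_ Hp].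
    assert (0 <= phi (PP (N + m) - Ps) / (cc / bb)) by (apply Rdiv_le_0_compat; lra).
    assert ((phi (PP N - Ps) - phi (PP (N + m) - Ps)) / (cc / bb) =
            phi (PP N - Ps) / (cc / bb) - phi (PP (N + m) - Ps) / (cc / bb)) by (field; lra). lra. }
  intros eps He. destruct (Cv' eps He) as [M HM]. exists (N + M)%nat. intros t Ht.
  specialize (HM (t - N)%nat ltac:(lia)). replace (N + (t - N))%nat with t in HM by lia. exact HM.
Qed.
End PR.

Theorem theorem3 (n : nat) (f : vec n -> R) (df : vec n -> vec n)
  (g : vec n -> option R) (sigma L gamma : R)
  (y z x : nat -> vec n) (ys zs xs : vec n) :
  0 < sigma -> 0 < L ->
  is_gradient f df -> strongly_convex f sigma -> lipschitz df L ->
  eproper g -> elsc (@vdot n) (@vsub n) g ->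
  (forall w, exists u, argmin_g g gamma (/ 2) w u) ->
  3 * sigma > 2 * L ->
  0 < gamma -> gamma < (3 * sigma - 2 * L) / L ^ 2 ->
  PR_iteration f g gamma y z x ->
  ecluster (@tdot n) (@tsub n) (fun t => (y t, z t, x t)) (ys, zs, xs) ->
  KL_function (@tdot n) (@tsub n) (Pgamma f g gamma) ->
  exists l : triple n, ecv (@tdot n) (@tsub n) (fun t => (y t, z t, x t)) l.
Proof.
  intros Hs HLp Hg Hc HL _ _ _ H3 Hgam Hgam2 Hit Hcl HKL.
  destruct n as [|m].
  - exists (ys, zs, xs). intros eps He. exists 0%nat. intros t _.
    unfold Rdist, enorm, tdot, tsub, vdot. cbv beta iota. simpl fsum.
    replace (0 + 0 + 0) with 0 by ring. rewrite sqrt_0. rewrite Rminus_0_r, Rabs_R0. lra.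
  - pose proof (sigma_le_L (S m) f df sigma L Hg Hc Hs HL ltac:(lia)) as HsL.
    apply (main_conv (S m) f df g sigma L gamma y z x Hg Hc Hs HL HLp Hgam Hit ys zs xs Hcl HKL).
    assert (0 < L ^ 2) by (apply pow_lt; lra).
    apply Rmult_lt_compat_r with (r := L ^ 2) in Hgam2; auto.
    replace ((3 * sigma - 2 * L) / L ^ 2 * L ^ 2) with (3 * sigma - 2 * L) in Hgam2 by (field; lra).
    lra.
Qed.
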